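(* Let documents $t_1,\ldots,t_N$, each containing at most $L$ distinct words from a dictionary of $D\ge 2$ words, arrive one at a time in a stream. Fix $\epsilon\in(0,1]$ and $p=2\log D$. The streaming algorithm maintains, for each word $x$, a counter $\#(x)$ of the number of documents seen so far containing $x$, and a hash map $H$ keyed by pairs of words, each entry holding a bag of numbers. On arrival of a document, the counters are updated, and for each unordered pair of distinct words $x,y$ in the document, with an independent coin flip of probability $q=\min\!\left(1,\frac{p}{\epsilon}\frac{1}{\sqrt{\#(x)\#(y)}}\right)$ (computed with the current counter values), the value $q$ is inserted into the bag of $(x,y)$ in $H$. Then the expected total memory used by this algorithm (the size of $H$ together with the counters) is $O(DL\lg(N)\log(D)/\epsilon)$.
   Context: $\lg$ is the base-2 logarithm and $\log$ the natural logarithm. Queries for the similarity of $x,y$ are answered by independently subsampling each stored value $q_i$ in the bag of $(x,y)$ with probability $\frac{p}{\epsilon}\frac{1}{q_i\sqrt{\#(x)\#(y)}}$ and scaling the number of survivors by $\epsilon/p$; queries do not affect memory. *)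

(* Defs.v *)
From HB Require Import structures.
From mathcomp Require Import all_boot all_order all_algebra.
From mathcomp Require Import all_classical all_reals all_analysis.
Set Implicit Arguments. Unset Strict Implicit. Unset Printing Implicit Defensive.
Import Order.TTheory GRing.Theory Num.Theory.
Local Open Scope ring_scope.

Section Stream.
Variables (R : realType) (D N : nat).

Notation docs := ('I_N -> {set 'I_D}).
(* coin index: (k, x, y) = document k, pair of words x < y *)
Notation coin := ('I_N * 'I_D * 'I_D)%type.

(* #(x) after the counters have been updated on arrival of document k *)
Definition cnt (t : docs) (k : 'I_N) (x : 'I_D) : nat :=
  #|[set i : 'I_N | (i <= k)%N && (x \in t i)]|.

(* (k,x,y) is an actual coin flip: x,y distinct words of document k,
   each unordered pair represented once by x < y *)
Definition valid (t : docs) (c : coin) : bool :=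
  let: (k, x, y) := c in [&& (x < y)%N, x \in t k & y \in t k].

Definition pparam : R := 2 * ln (D%:R : R).

Definition qprob (eps : R) (t : docs) (k : 'I_N) (x y : 'I_D) : R :=
  Num.min 1 (pparam / eps / Num.sqrt ((cnt t k x)%:R * (cnt t k y)%:R)).

(* success probability of coin c (0 for non-existent coins) *)
Definition coinp (eps : R) (t : docs) (c : coin) : R :=
  let: (k, x, y) := c in if valid t c then qprob eps t k x y else 0.

Definition weight (eps : R) (t : docs) (w : {ffun coin -> bool}) : R :=
  \prod_(c : coin) (if w c then coinp eps t c else 1 - coinp eps t c).

(* memory: D counters, plus the number of keys of H, plus the total
   number of values stored in the bags *)
Definition memory (w : {ffun coin -> bool}) : nat :=
  (D + #|[set xy : 'I_D * 'I_D | [exists k : 'I_N, w (k, xy.1, xy.2)]]|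
     + #|[set c : coin | w c]|)%N.

Definition expected_memory (eps : R) (t : docs) : R :=
  \sum_(w : {ffun coin -> bool}) weight eps t w * (memory w)%:R.

End Stream.

Definition lg {R : realType} (x : R) : R := ln x / ln 2.

(* Main.v *)
From HB Require Import structures.
From mathcomp Require Import all_boot all_order all_algebra.
From mathcomp Require Import all_classical all_reals all_analysis.
From mathcomp Require Import zify ring lra.
Require Import Defs.
Import Order.TTheory GRing.Theory Num.Theory.
Local Open Scope ring_scope.
Set Implicit Arguments. Unset Strict Implicit.

Section Prob.
Variables (R : realType) (I : finType) (a : I -> R).

Lemma sum_weight1 :
  \sum_(w : {ffun I -> bool}) \prod_i (if w i then a i else 1 - a i) = 1.
Proof.
rewrite -(bigA_distr_bigA (fun i (b : bool) => if b then a i else 1 - a i)).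
by apply: big1 => i _; rewrite big_bool /= addrC subrK.
Qed.

Lemma sum_weight_marg c0 :
  \sum_(w : {ffun I -> bool}) (\prod_i (if w i then a i else 1 - a i)) * (w c0)%:R = a c0.
Proof.
pose G i (b : bool) := if i == c0 then (if b then a i else 0)
                       else (if b then a i else 1 - a i).
transitivity (\sum_(w : {ffun I -> bool}) \prod_i G i (w i)).
  apply: eq_bigr => w _.
  rewrite (bigD1 c0) //= [in RHS](bigD1 c0) //= /G eqxx.
  rewrite [X in _ = _ * X](eq_bigr (fun i => if w i then a i else 1 - a i)); last first.
    by move=> i /negbTE ->.
  by case: (w c0); rewrite /= ?mulr1 ?mulr0 ?mul0r // mulrC.
rewrite -(bigA_distr_bigA G).
rewrite (bigD1 c0) //= big_bool /G eqxx /= addr0.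
rewrite [X in _ * X]big1 ?mulr1 //.
by move=> i /negbTE Hi; rewrite big_bool Hi /= addrC subrK.
Qed.
End Prob.

Lemma harm (R : realType) (n : nat) :
  \sum_(j < n.+1) 1 / (j.+1)%:R <= 1 + ln ((n.+1)%:R : R).
Proof.
elim: n => [|n IH].
  by rewrite big_ord1 /= ln1 addr0 divr1.
rewrite big_ord_recr /=.
have key : 1 / (n.+2)%:R <= ln ((n.+2)%:R : R) - ln ((n.+1)%:R : R).
  have h2 : (0 : R) < (n.+2)%:R by rewrite ltr0n.
  have h1 : (0 : R) < (n.+1)%:R by rewrite ltr0n.
  have := @le_ln1Dx R (- (1 / (n.+2)%:R)).
  have -> : 1 + - (1 / (n.+2)%:R) = (n.+1)%:R * ((n.+2)%:R)^-1 :> R.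
    have -> : (n.+2)%:R = (n.+1)%:R + 1 :> R by rewrite -natr1.
    by field; apply: lt0r_neq0; have := ler0n R n; lra.
  rewrite (@lnM R _ _ h1) ?posrE ?invr_gt0 // lnV ?posrE // => H.
  have : -1 < - (1 / (n.+2)%:R) :> R.
    rewrite ltrN2 ltr_pdivrMr // mul1r ltr1n //.
  move/H => H3; by rewrite -lerN2 opprB.
by apply: (le_trans (lerD IH key)); rewrite addrACA subrr addr0.
Qed.

Section Cnt.
Variables (R : realType) (D N : nat) (t : 'I_N -> {set 'I_D}) (x : 'I_D).

Lemma cnt_le k : (cnt t k x <= N)%N.
Proof. by rewrite /cnt; apply: leq_trans (max_card _) _; rewrite card_ord. Qed.

Lemma cnt_ge1 k : x \in t k -> (1 <= cnt t k x)%N.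
Proof.
move=> xk; rewrite /cnt card_gt0; apply/set0Pn; exists k.
by rewrite inE leqnn xk.
Qed.

Lemma cnt_lt (k1 k2 : 'I_N) : (k1 < k2)%N -> x \in t k2 -> (cnt t k1 x < cnt t k2 x)%N.
Proof.
move=> lt12 xk2; rewrite /cnt; apply: proper_card; apply/properP; split.
  apply/fintype.subsetP => i; rewrite !inE => /andP[ik ->]; rewrite andbT.
  exact: leq_trans ik (ltnW lt12).
exists k2; first by rewrite inE leqnn xk2.
by rewrite inE negb_and -ltnNge lt12.
Qed.

Lemma cnt_pred_lt k : ((cnt t k x).-1 < N)%N.
Proof. have := cnt_le k; have := ltn_ord k; lia. Qed.

Definition phi k : 'I_N := Ordinal (cnt_pred_lt k).

Lemma cnt_sum :
  \sum_(k : 'I_N) (if x \in t k then 1 / (cnt t k x)%:R else 0)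
    <= \sum_(j : 'I_N) 1 / (j.+1)%:R :> R.
Proof.
rewrite -big_mkcond /=.
set S := [set k : 'I_N | x \in t k].
have inj : {in S &, injective phi}.
  move=> k1 k2; rewrite !inE => h1 h2 /(congr1 val) /= E.
  have e : cnt t k1 x = cnt t k2 x.
    by have := cnt_ge1 h1; have := cnt_ge1 h2; lia.
  apply/val_inj/eqP; case: ltngtP => // [l|l].
    by have := cnt_lt l h2; rewrite e ltnn.
  by have := cnt_lt l h1; rewrite e ltnn.
have -> : \sum_(k | x \in t k) 1 / (cnt t k x)%:R = \sum_(k in S) 1 / ((phi k).+1)%:R :> R.
  rewrite [RHS]big_mkcond [LHS]big_mkcond; apply: eq_bigr => k _.
  rewrite inE; case: ifP => // xk /=.
  by have := cnt_ge1 xk => h; rewrite prednK.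
rewrite -(big_imset (fun j : 'I_N => 1 / (j.+1)%:R :> R) inj) /=.
rewrite [leRHS](bigID (mem (phi @: S))) /= lerDl.
by apply: sumr_ge0 => j _; rewrite divr_ge0.
Qed.
End Cnt.

Lemma inv_sqrt_le (R : realType) (a b : R) : 1 <= a -> 1 <= b ->
  (Num.sqrt (a * b))^-1 <= a^-1 + b^-1.
Proof.
move=> ha hb.
have a0 : 0 < a by apply: lt_le_trans ha.
have b0 : 0 < b by apply: lt_le_trans hb.
have ia : 0 <= a^-1 by rewrite invr_ge0 ltW.
have ib : 0 <= b^-1 by rewrite invr_ge0 ltW.
wlog ab : a b ha hb a0 b0 ia ib / a <= b.
  move=> W; case: (leP a b) => [h|h]; first exact: W.
  by rewrite mulrC addrC; apply: W => //; apply: ltW.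
have s : a <= Num.sqrt (a * b).
  rewrite -[a in a <= _](ger0_norm (ltW a0)) -sqrtr_sqr ler_sqrt.
    by rewrite expr2 ler_pM2l.
  by rewrite mulr_ge0 // ltW.
apply: le_trans (_ : a^-1 <= _); last by rewrite lerDl.
rewrite lef_pV2 ?posrE //.
exact: lt_le_trans a0 s.
Qed.

Section Sum.
Variables (R : realType) (D N : nat) (eps : R) (t : 'I_N -> {set 'I_D}).
Hypothesis (hD : (2 <= D)%N) (he : 0 < eps).

Definition hh (k : 'I_N) (x : 'I_D) : R :=
  if x \in t k then 1 / (cnt t k x)%:R else 0.

Lemma hh_ge0 k x : 0 <= hh k x.
Proof. by rewrite /hh; case: ifP => // _; rewrite divr_ge0. Qed.

Lemma pparam_ge0 : 0 <= pparam R D.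
Proof. by rewrite /pparam mulr_ge0 // ln_ge0 // ler1n; lia. Qed.

Lemma coinp_ge0 c : 0 <= coinp eps t c.
Proof.
case: c => [[k x] y] /=; case: ifP => // _; rewrite /qprob le_min ler01 /=.
by rewrite !divr_ge0 ?sqrtr_ge0 ?pparam_ge0 // ltW.
Qed.

Lemma coinp_le1 c : coinp eps t c <= 1.
Proof.
case: c => [[k x] y] /=; case: ifP => // _; rewrite /qprob ge_min lexx //.
Qed.

Lemma coinp_bound k x y :
  coinp eps t (k, x, y) <=
   pparam R D / eps * (hh k x * (y \in t k)%:R + (x \in t k)%:R * hh k y).
Proof.
rewrite /=; case: ifP => [/and3P[_ xk yk]|_]; last first.
  apply: mulr_ge0; first by rewrite divr_ge0 ?pparam_ge0 // ltW.
  by rewrite addr_ge0 // mulr_ge0 ?hh_ge0.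
rewrite /hh xk yk /= !mulr1 !mul1r /qprob.
have m : forall u v : R, Num.min u v <= v by move=> u v; rewrite ge_min lexx orbT.
apply: le_trans (m _ _) _.
apply: ler_wpM2l; first by rewrite divr_ge0 ?pparam_ge0 // ltW.
apply: inv_sqrt_le; rewrite ler1n; exact: cnt_ge1.
Qed.

Lemma card_sum k : \sum_(y : 'I_D) ((y \in t k)%:R : R) = #|t k|%:R.
Proof.
rewrite -sumr_const [RHS]big_mkcond; apply: eq_bigr => y _.
by case: (y \in t k).
Qed.

Lemma coin_sum (L : nat) : (forall k, #|t k| <= L)%N ->
  \sum_(c : ('I_N * 'I_D * 'I_D)%type) coinp eps t c <=
   pparam R D / eps * (2 * L%:R * (D%:R * \sum_(j < N) 1 / (j.+1)%:R)).
Proof.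
move=> hL.
have P0 : 0 <= pparam R D / eps by rewrite divr_ge0 ?pparam_ge0 // ltW.
have step : \sum_(c : ('I_N * 'I_D * 'I_D)%type) coinp eps t c <=
   \sum_(c : ('I_N * 'I_D * 'I_D)%type) pparam R D / eps *
      (hh c.1.1 c.1.2 * (c.2 \in t c.1.1)%:R + (c.1.2 \in t c.1.1)%:R * hh c.1.1 c.2).
  by apply: ler_sum => -[[k x] y] _; exact: coinp_bound.
apply: le_trans step _.
rewrite -mulr_sumr; apply: ler_wpM2l => //.
rewrite -(pair_bigA _ (fun (kx : 'I_N * 'I_D) (y : 'I_D) =>
   hh kx.1 kx.2 * (y \in t kx.1)%:R + (kx.2 \in t kx.1)%:R * hh kx.1 y)) /=.
rewrite -(pair_bigA _ (fun (k : 'I_N) (x : 'I_D) => \sum_(y : 'I_D)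
   (hh k x * (y \in t k)%:R + (x \in t k)%:R * hh k y))) /=.
have inner k : \sum_(x : 'I_D) \sum_(y : 'I_D)
   (hh k x * (y \in t k)%:R + (x \in t k)%:R * hh k y) <= 2 * L%:R * \sum_(x : 'I_D) hh k x.
  rewrite (eq_bigr (fun x => hh k x * #|t k|%:R + \sum_(y : 'I_D) (x \in t k)%:R * hh k y)); last first.
    by move=> x _; rewrite big_split /= -mulr_sumr card_sum.
  rewrite big_split /= exchange_big /=.
  rewrite [X in _ + X](eq_bigr (fun y => #|t k|%:R * hh k y)); last first.
    by move=> y _; rewrite -mulr_suml card_sum.
  rewrite -mulr_suml -mulr_sumr.
  have hs : 0 <= \sum_(x < D) hh k x by apply: sumr_ge0 => x _; exact: hh_ge0.
  have hT : (#|t k|%:R : R) <= L%:R by rewrite ler_nat.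
  have h := mulr_ge0 hs (elimT idP (etrans (subr_ge0 _ _) hT)).
  move: hs hT h; set s := \sum_(x < D) hh k x; set T := (#|t k|%:R : R).
  move=> *; nra.
apply: le_trans (ler_sum _ (fun k _ => inner k)) _.
rewrite -mulr_sumr; apply: ler_wpM2l; first by rewrite mulr_ge0.
rewrite exchange_big /=.
apply: le_trans (_ : \sum_(x : 'I_D) \sum_(j < N) 1 / (j.+1)%:R <= _).
  apply: ler_sum => x _; exact: cnt_sum.
by rewrite sumr_const card_ord mulr_natl.
Qed.
End Sum.

Lemma card_sumG (R : realType) (T : finType) (A : {set T}) :
  \sum_(y : T) ((y \in A)%:R : R) = #|A|%:R.
Proof.
rewrite -sumr_const [RHS]big_mkcond; apply: eq_bigr => y _.
by case: (y \in A).
Qed.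

Section Mem.
Variables (R : realType) (D N : nat) (eps : R) (t : 'I_N -> {set 'I_D}).
Hypothesis (hD : (2 <= D)%N) (he : 0 < eps).

Lemma mem_le (w : {ffun ('I_N * 'I_D * 'I_D)%type -> bool}) :
  (memory w <= D + 2 * #|[set c | w c]|)%N.
Proof.
rewrite /memory.
set V := [set c | w c].
have : (#|[set xy : 'I_D * 'I_D | [exists k : 'I_N, w (k, xy.1, xy.2)]]| <= #|V|)%N.
  apply: leq_trans (leq_imset_card (fun c : ('I_N * 'I_D * 'I_D)%type => (c.1.2, c.2)) V).
  apply: subset_leq_card; apply/fintype.subsetP => xy; rewrite inE => /existsP [k wk].
  apply/imsetP; exists (k, xy.1, xy.2); first by rewrite inE.
  by case: xy {wk}.
lia.
Qed.

Lemma exp_le : expected_memory eps t <=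
  D%:R + 2 * \sum_(c : ('I_N * 'I_D * 'I_D)%type) coinp eps t c.
Proof.
rewrite /expected_memory.
have W0 w : 0 <= weight eps t w.
  apply: prodr_ge0 => c _; case: (w c); first exact: coinp_ge0.
  by rewrite subr_ge0 coinp_le1.
apply: le_trans (_ : \sum_w weight eps t w *
     (D%:R + 2 * \sum_(c : ('I_N * 'I_D * 'I_D)%type) (w c)%:R) <= _).
  apply: ler_sum => w _; apply: ler_wpM2l => //.
  have := mem_le w; rewrite -(ler_nat R) natrD natrM => h; apply: le_trans h _.
  rewrite -(card_sumG R [set c | w c]).
  by under eq_bigr => c _ do rewrite inE.
rewrite (eq_bigr (fun w => D%:R * weight eps t w + 2 *
   \sum_(c : ('I_N * 'I_D * 'I_D)%type) weight eps t w * (w c)%:R)); last first.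
  by move=> w _; rewrite mulrDr [weight eps t w * D%:R]mulrC mulrCA mulr_sumr.
rewrite big_split /= -mulr_sumr -mulr_sumr exchange_big /=.
rewrite /weight sum_weight1 mulr1.
by under eq_bigr => c _ do rewrite sum_weight_marg.
Qed.
End Mem.

Theorem theorem7 (R : realType) :
  exists C : R, 0 < C /\
  forall (D N L : nat) (eps : R) (t : 'I_N -> {set 'I_D}),
    (2 <= D)%N -> (2 <= N)%N -> (1 <= L)%N ->
    0 < eps -> eps <= 1 ->
    (forall k, #|t k| <= L)%N ->
    expected_memory eps t <=
      C * D%:R * L%:R * lg (N%:R : R) * ln (D%:R : R) / eps.
Proof.
have l0 : (0 : R) < ln 2 by rewrite ln_gt0 // ltr1n.
have l1 : ln (2 : R) <= 1.
  rewrite -[leRHS](expRK 1) ler_ln ?posrE ?expR_gt0 //.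
  by have := expR_ge1Dx (1 : R).
exists (16 + (ln 2)^-1); split.
  by rewrite addr_gt0 // invr_gt0.
move=> D N L eps t hD hN hL he he1 hk.
have hS := coin_sum hD he hk.
have hE := exp_le t hD he.
case: N t hN hk hS hE => [//|n] t hN hk hS hE.
have hH := harm R n.
set H := \sum_(j < n.+1) 1 / (j.+1)%:R in hS hH.
have lD : ln 2 <= ln (D%:R : R) by rewrite ler_ln ?posrE ?ltr0n ?ler_nat //; lia.
have lN : ln 2 <= ln (n.+1%:R : R) by rewrite ler_ln ?posrE ?ltr0n ?ler_nat.
have lNg : ln (n.+1%:R : R) <= lg (n.+1%:R : R).
  rewrite /lg ler_pdivlMr //.
  have : 0 <= ln (n.+1%:R : R) by apply: le_trans lN; apply: ltW.
  move=> h; rewrite -[leRHS]mulr1; exact: ler_wpM2l.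
have g1 : 1 <= lg (n.+1%:R : R) by rewrite /lg ler_pdivlMr // mul1r.
have hH2 : H <= 2 * lg (n.+1%:R : R) by apply: le_trans hH _; rewrite mulr2n mulrDl mul1r; exact: lerD.
have H0 : 0 <= H by apply: sumr_ge0 => j _; rewrite divr_ge0.
have ie1 : 1 <= eps^-1 by rewrite invr_ge1 ?unitfE ?gt_eqF.
have L1 : (1 : R) <= L%:R by rewrite ler1n.
have D0 : (0 : R) <= D%:R by [].
apply: le_trans hE _.
have hS' : 2 * \sum_(c : ('I_n.+1 * 'I_D * 'I_D)%type) coinp eps t c <=
  2 * (pparam R D / eps * (2 * L%:R * (D%:R * H))) by rewrite ler_wpM2l.
apply: le_trans (lerD (lexx _) hS') _.
rewrite /pparam.
move: hH2 H0 ie1 L1 D0 lD g1 l0.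
set g := lg _; set d := ln (D%:R); set l := ln 2; set ie := eps^-1.
set LL := (L%:R : R); set DD := (D%:R : R).
move=> hH2 H0 ie1 L1 D0 lD g1 l0.
have Z0 : 0 <= DD * LL * d * ie.
  have d0 := le_trans (ltW l0) lD.
  have i0 := le_trans ler01 ie1.
  have LL0 := le_trans ler01 L1.
  by rewrite !mulr_ge0.
have hZ := ler_wpM2l Z0 hH2.
have Q1 : 1 <= l^-1 * (LL * g * d * ie).
  have q : l <= LL * g * d * ie.
    have a : 1 <= LL * g by apply: mulr_ege1.
    have b : l <= LL * g * d.
      apply: (le_trans lD); rewrite -[X in X <= _]mul1r; apply: ler_wpM2r; [exact: (le_trans (ltW l0) lD) | exact: a].
    apply: (le_trans b); apply: ler_peMr => //; exact: (le_trans (ltW l0) b).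
  by rewrite -(mulVf (lt0r_neq0 l0)) ler_wpM2l // invr_ge0 ltW.
have hD' := ler_peMr D0 Q1.
have -> : DD + 2 * (2 * d * ie * (2 * LL * (DD * H))) = DD + 8 * (DD * LL * d * ie * H) by ring.
have -> : (16 + l^-1) * DD * LL * g * d * ie =
   DD * (l^-1 * (LL * g * d * ie)) + 8 * (DD * LL * d * ie * (2 * g)) by ring.
apply: lerD => //; rewrite ler_wpM2l //.
Qed.
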